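(* Let $d\geq 2$. There exist $f_0,f_1\in\mathbb{F}_{2^d}$ such that $t^6+t^5+f_1t^4+f_0t^3+f_1t^2+t+1$ is irreducible over $\mathbb{F}_{2^d}$. *)

(* Defs.v *)
From mathcomp Require Export all_boot all_order all_algebra all_field.
Set Implicit Arguments.
Unset Strict Implicit.
Unset Printing Implicit Defensive.

(* Main.v *)
Require Import Defs.
From mathcomp Require Import ring zify.
From HB Require Import structures.
Set Implicit Arguments.
Unset Strict Implicit.
Unset Printing Implicit Defensive.
Import GRing.Theory.
Local Open Scope ring_scope.
Section Char2.
Variable (R : comNzRingType) (two0 : (2%:R : R) = 0).

Lemma c2_xx (x : R) : x + x = 0.
Proof. by rewrite -mulr2n -mulr_natr two0 mulr0. Qed.

Lemma c2_opp (x : R) : - x = x.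
Proof. by apply/eqP; rewrite eq_sym -subr_eq0 opprK c2_xx. Qed.

Lemma c2_exp2D k (x y : R) : (x + y) ^+ (2 ^ k) = x ^+ (2 ^ k) + y ^+ (2 ^ k).
Proof.
elim: k => [|k IH]; first by rewrite !expr1.
rewrite expnSr !exprM IH.
have -> : forall a b : R, (a + b) ^+ 2 = a ^+ 2 + b ^+ 2 + (a * b) * 2%:R.
  by move=> a b; ring.
by rewrite two0 mulr0 addr0.
Qed.

End Char2.

Definition frobk (L : fieldType) (k : nat) (x : L) := x ^+ (2 ^ k).

Section Frob.
Variable (L : fieldType) (two0 : (2%:R : L) = 0) (k : nat).

Lemma frobk_zmod : zmod_morphism (@frobk L k).
Proof.
move=> x y; rewrite /frobk c2_exp2D //.
by rewrite !(c2_opp two0).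
Qed.

Lemma frobk_mon : monoid_morphism (@frobk L k).
Proof. by split=> [|x y]; rewrite /frobk ?expr1n ?exprMn. Qed.

Definition frobR : {rmorphism L -> L} :=
  HB.pack (@frobk L k) (GRing.isZmodMorphism.Build _ _ (@frobk L k) frobk_zmod)
     (GRing.isMonoidMorphism.Build _ _ (@frobk L k) frobk_mon).

Lemma frobRE x : frobR x = x ^+ (2 ^ k).
Proof. by []. Qed.

End Frob.

Section Key.
Variables (F : finFieldType) (d : nat) (hF : #|F| = (2 ^ d)%N) (two0F : (2%:R : F) = 0).
Variables (L : fieldType) (iota : {rmorphism F -> L}).
Variables (gam n : F) (hT : \sum_(i < d) gam ^+ (2 ^ i)%N != 0) (hn : n != 0)
  (hg : forall a, a^+3 + a^+2 + gam*n*a + n != 0).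
Variable (z : L).
Hypothesis (hz : z^+6 + z^+5 + iota (1 + gam*n) * z^+4 + iota n * z^+3
                 + iota (1 + gam*n) * z^+2 + z + 1 = 0).

Lemma two0L : (2%:R : L) = 0.
Proof. by rewrite -(rmorph_nat iota) two0F rmorph0. Qed.

Local Notation Pw j := (frobR two0L (d * j)).

Lemma PwE j x : Pw j x = x ^+ (2 ^ (d * j)).
Proof. by []. Qed.

Lemma Pw_iota j a : Pw j (iota a) = iota a.
Proof.
rewrite PwE -rmorphXn; congr (iota _); elim: j => [|j IH]; first by rewrite muln0 expr1.
by rewrite mulnS expnD exprM -hF expf_card.
Qed.

Lemma PwPw i j x : Pw i (Pw j x) = Pw (i + j) x.
Proof. by rewrite !PwE -exprM -expnD mulnDr addnC. Qed.

Lemma Pw0 x : Pw 0 x = x.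
Proof. by rewrite PwE muln0 expr1. Qed.

Lemma fixedF x : Pw 1 x = x -> exists a, x = iota a.
Proof.
move=> hx.
have := congr1 (fun p => (map_poly iota p).[x]) (finField_genPoly F).
rewrite /= rmorphB /= map_polyXn map_polyX !hornerE hF.
have hx' : x ^+ (2 ^ d) = x by rewrite -{2}hx PwE muln1.
rewrite hx' subrr rmorph_prod horner_prod => /esym/eqP.
rewrite prodf_seq_eq0 => /hasP[a _ /=].
rewrite rmorphB /= map_polyX map_polyC /= !hornerE subr_eq0 => /eqP ->.
by exists a.
Qed.

Local Notation c := (iota (gam * n)).
Local Notation e := (iota n).
Definition gL (y : L) := y^+3 + y^+2 + c*y + e.

Lemma gL_iota a : gL (iota a) = iota (a^+3 + a^+2 + gam*n*a + n).
Proof. by rewrite /gL !rmorphD !rmorphXn !rmorphM. Qed.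

Lemma gL_Pw j y : gL (Pw j y) = Pw j (gL y).
Proof. by rewrite /gL !rmorphD !rmorphXn !rmorphM !Pw_iota. Qed.

Lemma root_notF y : gL y = 0 -> Pw 1 y != y.
Proof.
move=> hy; apply/eqP => /fixedF [a ha]; move: hy; rewrite ha gL_iota.
by move/eqP; rewrite fmorph_eq0; apply/negP.
Qed.

Lemma z0 : z != 0.
Proof.
apply/eqP => z0; move: hz; rewrite z0 !expr0n /= !mulr0 !add0r.
by move/eqP; rewrite oner_eq0.
Qed.

Lemma hu_z : gL (z + z^-1) = 0.
Proof.
have h : z^+3 * gL (z + z^-1) = (z^+6 + z^+5 + iota (1 + gam*n) * z^+4 + iota n * z^+3
                 + iota (1 + gam*n) * z^+2 + z + 1) + 2%:R * (z^+4 + z^+3 + z^+2).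
  rewrite /gL rmorphD rmorph1; field; exact: z0.
move: h; rewrite hz two0L mul0r addr0 => /eqP; rewrite mulf_eq0 expf_eq0 /=.
by rewrite (negbTE z0) /= => /eqP.
Qed.

Section U.
Variable u : L.
Hypothesis hu : gL u = 0.

Local Notation u1 := (Pw 1 u).
Local Notation u2 := (Pw 2 u).

Lemma hu1 : gL u1 = 0.
Proof. by rewrite gL_Pw hu rmorph0. Qed.

Lemma hu2 : gL u2 = 0.
Proof. by rewrite gL_Pw hu rmorph0. Qed.

Lemma u1_neq : u1 != u.
Proof. exact: root_notF hu. Qed.

Local Notation S := (u^+2 + u*u1 + u1^+2 + u + u1 + c).

Lemma S0 : S = 0.
Proof.
have h : (u - u1) * S = gL u - gL u1 by rewrite /gL; ring.
move: h; rewrite hu hu1 subrr => /eqP; rewrite mulf_eq0 subr_eq0 eq_sym.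
by rewrite (negbTE u1_neq) /= => /eqP.
Qed.

Local Notation w := (- (1 + u + u1)).

Lemma fact3 y : gL y = (y - u) * (y - u1) * (y - w).
Proof.
have h : gL y = (y - u) * (y - u1) * (y - w) + S * (y - u) + gL u.
  by rewrite /gL; ring.
by rewrite h S0 hu mul0r !addr0.
Qed.

Lemma w_root : gL w = 0.
Proof. by rewrite fact3 subrr mulr0. Qed.

Lemma Pw1u1 : Pw 1 u1 = u2.
Proof. exact: (PwPw 1 1 u). Qed.

Lemma u2_ne_u : u2 != u.
Proof.
apply/eqP => h.
have : Pw 1 w != w by apply: root_notF; exact: w_root.
by rewrite rmorphN !rmorphD rmorph1 Pw1u1 h addrAC eqxx.
Qed.

Lemma u2_ne_u1 : u2 != u1.
Proof.
apply/eqP; rewrite -Pw1u1 => /fmorph_inj /eqP; exact/negP/u1_neq.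
Qed.

Lemma u2w : u2 = w.
Proof.
have := hu2; rewrite fact3 => /eqP; rewrite !mulf_eq0 !subr_eq0.
by rewrite (negbTE u2_ne_u) (negbTE u2_ne_u1) /= => /eqP.
Qed.

Lemma u3 : Pw 3 u = u.
Proof.
have -> : Pw 3 u = Pw 1 u2 by rewrite PwPw.
rewrite u2w rmorphN !rmorphD rmorph1 Pw1u1 u2w.
by ring.
Qed.

Lemma e0 : e != 0.
Proof. by rewrite fmorph_eq0. Qed.

Lemma u0 : u != 0.
Proof.
apply/eqP => h; have h0 : gL 0 = e by rewrite /gL; ring.
have := hu; rewrite h h0.
by move/eqP; rewrite (negbTE e0).
Qed.

Lemma u1_0 : u1 != 0.
Proof. by rewrite fmorph_eq0 u0. Qed.
Lemma u2_0 : u2 != 0.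
Proof. by rewrite fmorph_eq0 u0. Qed.

Lemma vieta3 : u * u1 * u2 = - e.
Proof.
have h0 : gL 0 = e by rewrite /gL; ring.
have := fact3 0; rewrite h0 => ->.
by rewrite u2w; ring.
Qed.

Lemma vieta2 : u * u1 + u * u2 + u1 * u2 = c.
Proof.
rewrite u2w; transitivity (c - S); first by ring.
by rewrite S0 subr0.
Qed.

Lemma tv : u^-1 + Pw 1 u^-1 + Pw 2 u^-1 = iota gam.
Proof.
rewrite !fmorphV.
have h : u^-1 + u1^-1 + u2^-1 = (u * u1 + u * u2 + u1 * u2) / (u * u1 * u2).
  by field; rewrite u0 u1_0 u2_0.
rewrite h vieta2 vieta3 invrN mulrN c2_opp ?two0L //.
by rewrite -fmorphV -rmorphM mulfK.
Qed.

End U.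

Definition T (x : L) := \sum_(i < d) (x + Pw 1 x + Pw 2 x) ^+ (2 ^ i)%N.

Lemma TD a b : T (a + b) = T a + T b.
Proof.
rewrite /T -big_split; apply: eq_bigr => i _; rewrite !rmorphD.
transitivity (((a + Pw 1 a + Pw 2 a) + (b + Pw 1 b + Pw 2 b)) ^+ (2 ^ i));
  first by congr (_ ^+ _); ring.
exact: c2_exp2D two0L i _ _.
Qed.

Lemma tele (x : L) m : \sum_(i < m) (x^+2 + x) ^+ (2 ^ i)%N = x ^+ (2 ^ m)%N + x.
Proof.
elim: m => [|m IH]; first by rewrite big_ord0 expr1 c2_xx ?two0L.
rewrite big_ord_recr /= IH c2_exp2D ?two0L // -exprM -expnS.
transitivity (x ^+ (2 ^ m.+1) + x + (x ^+ (2 ^ m) + x ^+ (2 ^ m))); first by ring.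
by rewrite c2_xx ?two0L // addr0.
Qed.

Lemma Pw11 x : Pw 1 (Pw 1 x) = Pw 2 x. Proof. exact: PwPw. Qed.
Lemma Pw12 x : Pw 1 (Pw 2 x) = Pw 3 x. Proof. exact: PwPw. Qed.
Lemma Pw13 x : Pw 1 (Pw 3 x) = Pw 4 x. Proof. exact: PwPw. Qed.
Lemma Pw23 x : Pw 2 (Pw 3 x) = Pw 5 x. Proof. exact: PwPw. Qed.

Lemma T0 y : Pw 3 y = y -> T (y^+2 + y) = 0.
Proof.
move=> hy.
have sq a b : (a + b) ^+ 2 = a ^+ 2 + b ^+ 2 := c2_exp2D two0L 1 a b.
have ht : (y^+2 + y) + Pw 1 (y^+2 + y) + Pw 2 (y^+2 + y)
          = (y + Pw 1 y + Pw 2 y) ^+ 2 + (y + Pw 1 y + Pw 2 y).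
  by rewrite !rmorphD !rmorphXn !sq; ring.
rewrite /T; under eq_bigr do rewrite ht.
rewrite tele.
have -> : (y + Pw 1 y + Pw 2 y) ^+ (2 ^ d) = Pw 1 (y + Pw 1 y + Pw 2 y).
  by rewrite PwE muln1.
rewrite !rmorphD Pw11 Pw12 hy.
transitivity ((y + Pw 1 y + Pw 2 y) + (y + Pw 1 y + Pw 2 y)); first by ring.
by rewrite c2_xx ?two0L.
Qed.

Lemma Pwk_z k : (0 < k < 6)%N -> Pw k z != z.
Proof.
move=> hk; apply/eqP => hz'.
have hku : Pw k (z + z^-1) = z + z^-1 by rewrite rmorphD fmorphV hz'.
have hu := hu_z.
have u0' := u0 hu.
case: k hk hz' hku => [|[|[|[|[|[|k]]]]]] // _ hz' hku.
- by move: (u1_neq hu); rewrite hku eqxx.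
- by move: (u2_ne_u hu); rewrite hku eqxx.
- pose v := (z + z^-1)^-1.
  have hv3 : Pw 3 v = v by rewrite fmorphV hku.
  have hy3 : Pw 3 (z / (z + z^-1)) = z / (z + z^-1) by rewrite fmorph_div hku hz'.
  have hyv : (z / (z + z^-1)) ^+ 2 + z / (z + z^-1)
             = 2%:R * (z / (z + z^-1)) ^+ 2 + v ^+ 2.
    rewrite /v; field; rewrite z0 /=.
    have -> : z * z + 1 = z * (z + z^-1) by field; exact: z0.
    by rewrite mulf_neq0 ?z0.
  have A := T0 hy3; rewrite hyv two0L mul0r add0r in A.
  have B := T0 hv3; rewrite TD A add0r in B.
  move: B; rewrite /T /v (tv hu).
  rewrite -(eq_bigr _ (fun i _ => rmorphXn iota _ _)) -rmorph_sum => /eqP.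
  by rewrite fmorph_eq0 (negbTE hT).
- have h4 := Pw13 (z + z^-1); rewrite hku (u3 hu) in h4.
  by move: (u1_neq hu); rewrite h4 eqxx.
- have h5 := Pw23 (z + z^-1); rewrite hku (u3 hu) in h5.
  by move: (u2_ne_u hu); rewrite h5 eqxx.
Qed.

Lemma key_size (q : {poly F}) : root (map_poly iota q) z -> q != 0 -> (7 <= size q)%N.
Proof.
move=> hq q0.
have := @max_poly_roots _ (map_poly iota q) [seq Pw j z | j <- seq.iota 0 6].
rewrite map_poly_eq0 q0 size_map size_iota size_map_poly; apply.
  by [].   apply/allP => y /mapP [j _ ->]; rewrite /root.
  have -> : map_poly iota q = map_poly (Pw j) (map_poly iota q).
    by rewrite -map_poly_comp; apply: eq_map_poly => a; symmetry; exact: Pw_iota.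
  by rewrite horner_map (rootP hq) rmorph0.
rewrite map_inj_in_uniq ?iota_uniq // => i j; rewrite !mem_iota !add0n => hi hj.
wlog lij : i j hi hj / (i <= j)%N.
  move=> W; case: (leqP i j) => h; first exact: W.
  by move=> e; apply/esym/W => //; apply: ltnW.
move=> e; apply/eqP; rewrite eqn_leq lij andTb leqNgt; apply/negP => lt.
have H : Pw (j - i) z != z by apply: Pwk_z; rewrite subn_gt0 lt andTb; lia.
move: H; rewrite -(inj_eq (fmorph_inj (Pw i))) PwPw (subnKC lij).
by rewrite -e eqxx.
Qed.

End Key.
Lemma exists_gamma (F : finFieldType) d (hd : (2 <= d)%N) (hF : #|F| = (2 ^ d)%N) :
  exists g : F, g != 1 /\ \sum_(i < d) g ^+ (2 ^ i)%N != 0.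
Proof.
case: (boolP [exists g : F, (g != 1) && (\sum_(i < d) g ^+ (2 ^ i)%N != 0)]) =>
   [/existsP[g /andP[h1 h2]]|/existsPn H]; first by exists g.
exfalso.
pose pT : {poly F} := \sum_(i < d) 'X^(2 ^ i)%N.
have hpT x : pT.[x] = \sum_(i<d) x ^+ (2 ^ i)%N.
  by rewrite horner_sum; apply: eq_bigr => i _; rewrite hornerXn.
have pT_coef j : pT`_j = \sum_(i < d) ((j == 2 ^ i)%N%:R).
  by rewrite coef_sum; apply: eq_bigr => i _; rewrite coefXn.
have pT0 : pT != 0.
  apply/eqP => /(congr1 (fun p : {poly F} => p`_1)); rewrite pT_coef coef0.
  case: d hd {H hF pT hpT pT_coef} => // d' _.
  rewrite big_ord_recl /= big1 ?addr0 => [|i _]; first by move/eqP; rewrite oner_eq0.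
  rewrite /bump /= add1n expnS; have := expn_gt0 2 i => h.
  by have -> : (1 == 2 * 2 ^ i)%N = false by lia.
have pTsz : (size pT <= 2 ^ (d.-1) + 1)%N.
  apply/leq_sizeP => j hj; rewrite pT_coef big1 // => i _.
  have : (2 ^ i <= 2 ^ (d.-1))%N by rewrite leq_exp2l //; case: d {H hF pT hpT pT_coef pT0 hj} hd i => // d' _ i /=; rewrite -ltnS.
  move=> hi; have -> : (j == 2 ^ i)%N = false by lia.
  by [].
have := @max_poly_roots _ pT (enum (predC1 (1:F))) pT0.
rewrite enum_uniq -cardE cardC1 hF.
have -> : all (root pT) (enum (predC1 (1:F))).
  apply/allP => x; rewrite mem_enum /= => hx; rewrite /root hpT.
  have hx' : x != 1 := hx; by move: (H x); rewrite hx' /= negbK.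
move=> /(_ isT isT) h.
have := leq_trans h pTsz.
case: d hd {H hF pT hpT pT_coef pT0 pTsz h} => [|[|m]] // _.
rewrite !expnS /=; have := expn_gt0 2 m; lia.
Qed.

Lemma exists_n (F : finFieldType) (two0: (2%:R : F) = 0) (g : F) (hg1 : g != 1) :
  exists n : F, n != 0 /\ forall a, a^+3 + a^+2 + g*n*a + n != 0.
Proof.
case: (boolP [exists n : F, (n != 0) && [forall a, a^+3 + a^+2 + g*n*a + n != 0]]) =>
   [/existsP[n /andP[hn /forallP ha]]|/existsPn H]; first by exists n.
exfalso.
have root_of n : n != 0 -> exists a, a^+3 + a^+2 + g*n*a + n == 0.
  move=> hn; move: (H n); rewrite hn /= negb_forall => /existsP[a].
  by rewrite negbK; exists a.
pose r n := odflt 0 [pick a | a^+3 + a^+2 + g*n*a + n == 0].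
have hr n : n != 0 -> r n ^+3 + r n ^+2 + g*n*r n + n = 0.
  move=> hn; rewrite /r; case: pickP => [a /eqP //|H0].
  by case: (root_of n hn) => a ha; rewrite H0 in ha.
have props n a : n != 0 -> a^+3 + a^+2 + g*n*a + n = 0 ->
    [/\ a != 0, a != 1 & g * a + 1 != 0].
  move=> hn ha; split.
  - apply/eqP => a0; move: ha; rewrite a0 => ha.
    have : n = 0 by rewrite -[RHS]ha; ring.
    by move/eqP; rewrite (negbTE hn).
  - apply/eqP => a1; move: ha; rewrite a1 => ha.
    have : n * (g + 1) = 0.
      rewrite -[RHS]ha; transitivity (n * (g + 1) + (1 + 1)); first by rewrite c2_xx // addr0.
      ring.
    move/eqP; rewrite mulf_eq0 (negbTE hn) /= addr_eq0 c2_opp // => /eqP hg.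
    by move: hg1; rewrite hg eqxx.
  - apply/eqP => hga.
    have : a ^+ 2 * (a + 1) = 0.
      rewrite -[RHS]ha; transitivity (a ^+ 2 * (a + 1) + n * (g * a + 1)); first by rewrite hga mulr0 addr0.
      ring.
    move/eqP; rewrite mulf_eq0 expf_eq0 /= => /orP[/eqP a0|].
      by move: hga; rewrite a0 mulr0 add0r => /eqP; rewrite oner_eq0.
    rewrite addr_eq0 c2_opp // => /eqP a1; move: hga; rewrite a1 mulr1 => /eqP.
    by rewrite addr_eq0 c2_opp // (negbTE hg1).
pose m n := if n == 0 then 0 else r n.
have minj : injective m.
  move=> n1 n2; rewrite /m; case: eqP => h1; case: eqP => h2 //.
  - by rewrite h1 h2.
  - by move=> e; have [/negP] := props n2 _ (negbT (introF eqP h2)) (hr n2 (introN eqP h2)); rewrite -e eqxx.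
  - by move=> e; have [/negP] := props n1 _ (introN eqP h1) (hr n1 (introN eqP h1)); rewrite e eqxx.
  move=> e; have hh1 := hr n1 (introN eqP h1); have hh2 := hr n2 (introN eqP h2).
  have [_ _ hga] := props n1 _ (introN eqP h1) hh1.
  rewrite -e in hh2.
  have : (n1 - n2) * (g * r n1 + 1) = 0.
    transitivity ((r n1 ^+ 3 + r n1 ^+ 2 + g * n1 * r n1 + n1) - (r n1 ^+ 3 + r n1 ^+ 2 + g * n2 * r n1 + n2)); first by ring.
    by rewrite hh1 hh2 subrr.
  by move/eqP; rewrite mulf_eq0 (negPf hga) orbF subr_eq0 => /eqP.
have /codomP [n hn] := injF_onto minj 1.
move: hn; rewrite /m; case: eqP => hn0; first by move/eqP; rewrite oner_eq0.
move=> e; have [_ /negP] := props n _ (introN eqP hn0) (hr n (introN eqP hn0)).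
by rewrite -e eqxx.
Qed.

Lemma evalP (F L : fieldType) (f : {rmorphism F -> L}) (a b : F) (x : L) :
 (map_poly f ('X^6 + 'X^5 + a%:P * 'X^4 + b%:P * 'X^3 + a%:P * 'X^2 + 'X + 1)).[x]
  = x^+6 + x^+5 + f a * x^+4 + f b * x^+3 + f a * x^+2 + x + 1.
Proof.
rewrite !mul_polyC !rmorphD /= !map_polyZ (map_polyXn f 6) (map_polyXn f 5) (map_polyXn f 4) (map_polyXn f 3) (map_polyXn f 2) (map_polyX f) rmorph1.
by rewrite !hornerE.
Qed.

Theorem proposition7p12 (d : nat) (F : finFieldType)
  (hd : (2 <= d)%N) (hF : #|F| = (2 ^ d)%N) :
  exists f0 f1 : F,
    irreducible_poly
      ('X^6 + 'X^5 + f1%:P * 'X^4 + f0%:P * 'X^3 + f1%:P * 'X^2 + 'X + 1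
        : {poly F}).
Proof.
have two0F : (2%:R : F) = 0.
  by apply: pcharf0; apply: (card_finPcharP hF).
have [gam [hg1 hT]] := exists_gamma hd hF.
have [n [hn hgn]] := exists_n two0F hg1.
exists n, (1 + gam * n).
set P := (X in irreducible_poly X).
have P6 : P`_6 = 1.
  by rewrite /P !(coefD, coefCM, coefXn, coefX, coef1) /= !(mulr0, addr0, add0r).
have Psz : (size P <= 7)%N.
  apply/leq_sizeP => j hj; rewrite /P !(coefD, coefCM, coefXn, coefX, coef1).
  by case: j hj => [|[|[|[|[|[|[|j]]]]]]] //= _; rewrite !(mulr0, addr0, add0r).
have P0 : P != 0 by apply/eqP => h; move: P6; rewrite h coef0 => /eqP; rewrite eq_sym oner_eq0.
have [L0 [rs Prs _]] := FinSplittingFieldFor P0.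
case: rs Prs => [|r rs] Prs.
  move/eqp_size: Prs; rewrite big_nil size_poly1 size_map_poly => hs.
  by move: P6; rewrite (nth_default 0) ?hs // => /eqP; rewrite eq_sym oner_eq0.
have hr : root (map_poly (in_alg L0) P) r.
  by rewrite (eqp_root Prs) big_cons rootM root_XsubC eqxx.
apply/(subfx_irreducibleP hr P0) => q hq q0.
apply: leq_trans Psz _.
have hz := hr; move: hz; rewrite /root /P evalP => /eqP hz.
exact: (@key_size F d hF two0F L0 (in_alg L0) gam n hT hn hgn r hz q hq q0).
Qed.
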